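(* Let $\rho_p>0$, $\bar\rho_{ac}>0$, $\bar v_a>0$, $\bar u_d>0$, $C_D>0$, $\rho_{sn,p}>0$, $\Delta T^g_d\ge 0$ and an integer $\delta\ge 2$ be given. Let $\mathbf{r}_{d1},\dots,\mathbf{r}_{dN_d}\in\mathbb{R}^3$ ($N_d\ge2$) be pairwise distinct points, i.e. $\|\mathbf{r}_{dj}-\mathbf{r}_{dj'}\|>0$ for $j\ne j'$, and let $\mathbf{u}\in\mathbb{R}^3$ be a unit vector. For $R\ge 0$ define $\varrho_j(R)=\|R\mathbf{u}-\mathbf{r}_{dj}\|$, $\tilde\varrho_\delta(R)=\big(\sum_{j=1}^{N_d}\varrho_j(R)^\delta\big)^{1/\delta}$, $\bar\varrho_d(R)=\tilde\varrho_\delta(R)+\rho_{sn,p}$, and $$\bar T_d(\varrho)=\frac{1}{\lambda_0}\Big(\tanh^{-1}\!\big(\tfrac{v_{sw}(\varrho)}{\bar v_d}\big)+\tan^{-1}\!\big(\tfrac{v_{sw}(\varrho)}{\bar v_d}\big)\Big),$$ where $\lambda_0=\sqrt{\bar u_d C_D}$, $\bar v_d=\sqrt{\bar u_d/C_D}$, $v_{sw}(\varrho)=\sqrt{\frac{(\lambda-1)\bar u_d}{(\lambda+1)C_D}}$ with $\lambda=e^{2C_D\varrho}$. Define $$f(R)=\bar\rho_{ac}+R+\bar v_a\big(\bar T_d(\bar\varrho_d(R))+\Delta T^g_d\big).$$ Let $R^*$ be a point with $R^*>0$ at which $\frac{d\tilde\varrho_\delta}{dR}(R^* )=0$ (a minimizer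 of $\tilde\varrho_\delta$). Then $f$ is locally convex around $R^*$: there exists $\epsilon>0$ such that $\frac{d^2 f}{dR^2}(R)>0$ for all $R$ with $|R-R^*|<\epsilon$.
   Context: Interpretation: the protected area is a ball of radius $\rho_p$ centered at the origin; $\mathbf{r}_{dj}$ are defender positions; $\mathbf{u}$ is the direction of the attackers' center of mass, and $R\mathbf{u}$ is a candidate gathering center at distance $R$ from the origin on the attackers' shortest path to the protected area. $\varrho_j(R)$ is the distance of defender $j$ to the gathering center; $\tilde\varrho_\delta$ is an upper approximation of $\max_j\varrho_j$; $\rho_{sn,p}$ is the radius of the planar gathering formation; $\bar T_d(\varrho)$ is the time-optimal travel time over distance $\varrho$ for an agent with acceleration bound $\bar u_d$ and quadratic drag coefficient $C_D$ starting from rest; $\bar v_a$ is the attackers' maximum speed; $\bar\rho_{ac}$ is the maximum connectivity radius of the attacker swarm. *)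

(* Defs.v *)
From Stdlib Require Import Reals Lra.
From Coquelicot Require Import Coquelicot.
Open Scope R_scope.

Definition vec3 : Type := (R * R * R)%type.
Definition vx (v : vec3) : R := fst (fst v).
Definition vy (v : vec3) : R := snd (fst v).
Definition vz (v : vec3) : R := snd v.
Definition norm3 (v : vec3) : R := sqrt (vx v ^ 2 + vy v ^ 2 + vz v ^ 2).
Definition sub3 (a b : vec3) : vec3 := (vx a - vx b, vy a - vy b, vz a - vz b).
Definition scal3 (k : R) (a : vec3) : vec3 := (k * vx a, k * vy a, k * vz a).

(* inverse hyperbolic tangent, for |x| < 1 *)
Definition artanh (x : R) : R := / 2 * ln ((1 + x) / (1 - x)).

Definition varrho (u : vec3) (rd : nat -> vec3) (j : nat) (Rr : R) : R :=
  norm3 (sub3 (scal3 Rr u) (rd j)).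

(* tilde varrho_delta(R) = (sum_{j=1}^{N_d} varrho_j(R)^delta)^(1/delta);
   defenders are indexed 0 .. Nd-1 *)
Definition varrho_tilde (delta Nd : nat) (u : vec3) (rd : nat -> vec3) (Rr : R) : R :=
  Rpower (sum_f_R0 (fun j => varrho u rd j Rr ^ delta) (Nd - 1)) (/ INR delta).

Definition lambda0 (ud CD : R) : R := sqrt (ud * CD).
Definition vbar_d (ud CD : R) : R := sqrt (ud / CD).
Definition v_sw (ud CD rho : R) : R :=
  let lam := exp (2 * CD * rho) in
  sqrt (((lam - 1) * ud) / ((lam + 1) * CD)).
Definition Tbar_d (ud CD rho : R) : R :=
  / lambda0 ud CD *
  (artanh (v_sw ud CD rho / vbar_d ud CD) + atan (v_sw ud CD rho / vbar_d ud CD)).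

Definition f_gather (rho_ac va ud CD rho_snp DTg : R) (delta Nd : nat)
  (u : vec3) (rd : nat -> vec3) (Rr : R) : R :=
  rho_ac + Rr +
  va * (Tbar_d ud CD (varrho_tilde delta Nd u rd Rr + rho_snp) + DTg).

(* Main.v *)
Require Import Defs.
From Stdlib Require Import Reals Lra Lia.
From Coquelicot Require Import Coquelicot.
Open Scope R_scope.
Definition wf (CD r : R) := (exp (2*CD*r) - 1) / (exp (2*CD*r) + 1).

Lemma wf_bounds CD r : 0 < CD -> 0 < r -> 0 < wf CD r < 1.
Proof.
  intros. unfold wf. assert (1 < exp (2*CD*r)).
  { rewrite <- exp_0. apply exp_increasing. nra. }
  split. apply Rdiv_lt_0_compat; lra.
  apply Rmult_lt_reg_r with (exp (2*CD*r) + 1). lra.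
  unfold Rdiv. rewrite Rmult_assoc, Rinv_l; lra.
Qed.

Lemma T_alg E s CD l0 : 0 < s < 1 -> 0 < l0 -> E = (1 + s*s)/(1 - s*s) ->
 / l0 *
 (/ 2 *
  (((2 * CD * 1 * E * / (E + 1) +
     (E + - (1)) *
     (- (2 * CD * 1 * E) *
      / ((E + 1) * (E + 1)))) *
    / (2 * s) *
    / (1 + - s) +
    (1 + s) *
    (-
     -
     ((2 * CD * 1 * E * / (E + 1) +
       (E + - (1)) *
       (- (2 * CD * 1 * E) *
        / ((E + 1) * (E + 1)))) *
      / (2 * s)) *
     /
     ((1 + - s) *
      (1 + - s)))) *
   /
   ((1 + s) *
    / (1 + - s))) +
  (2 * CD * 1 * E * / (E + 1) +
   (E + - (1)) *
   (- (2 * CD * 1 * E) *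
    / ((E + 1) * (E + 1)))) *
  / (2 * s) *
  /
  (1 +
   s *
   (s * 1))) = CD / l0 / s.
Proof.
  intros Hs Hl HE. subst E.
  assert (1 - s*s <> 0) by nra. assert (1 + s*s <> 0) by nra.
  field. repeat split; try lra; nra.
Qed.

Lemma T_deriv CD l0 r : 0 < CD -> 0 < r -> 0 < l0 ->
  is_derive (fun r => / l0 * (artanh (sqrt (wf CD r)) + atan (sqrt (wf CD r)))) r (CD / l0 / sqrt (wf CD r)).
Proof.
  intros HC Hr Hl. destruct (wf_bounds CD r HC Hr) as [w0 w1].
  assert (sw : 0 < sqrt (wf CD r) < 1).
  { split. apply sqrt_lt_R0; lra. rewrite <- sqrt_1. apply sqrt_lt_1; lra. }
  unfold artanh. unfold wf in *. auto_derive.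
  all: unfold Rminus, Rdiv in *.
  all: assert (0 < exp (2*CD*r)) by apply exp_pos.
  1: repeat split; try lra; apply Rmult_lt_0_compat; try lra; apply Rinv_0_lt_compat; lra.
  apply T_alg; auto.
  set (E := exp (2*CD*r)) in *.
  rewrite sqrt_sqrt by lra. field. split; try lra.
Qed.

Definition Tp (CD l0 r : R) := CD / l0 / sqrt (wf CD r).

Lemma wf_mono CD r0 r : 0 < CD -> r0 <= r -> wf CD r0 <= wf CD r.
Proof.
  intros HC Hr. unfold wf.
  assert (exp (2*CD*r0) <= exp (2*CD*r)).
  { destruct (Req_dec r0 r). subst; lra. left. apply exp_increasing. nra. }
  assert (0 < exp (2*CD*r0)) by apply exp_pos.
  set (a := exp (2*CD*r0)) in *. set (b := exp (2*CD*r)) in *.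
  replace ((a-1)/(a+1)) with (1 - 2 * / (a+1)) by (field; lra).
  replace ((b-1)/(b+1)) with (1 - 2 * / (b+1)) by (field; lra).
  assert (/ (b+1) <= / (a+1)) by (apply Rinv_le_contravar; lra). lra.
Qed.

Lemma Tp_deriv CD l0 r0 r : 0 < CD -> 0 < l0 -> 0 < r0 -> r0 <= r ->
  ex_derive (Tp CD l0) r /\
  Rabs (Derive (Tp CD l0) r) <= CD / l0 * CD / (2 * sqrt (wf CD r0) * wf CD r0).
Proof.
  intros HC Hl Hr0 Hr.
  destruct (wf_bounds CD r HC ltac:(lra)) as [w0 w1].
  destruct (wf_bounds CD r0 HC ltac:(lra)) as [v0 v1].
  assert (Hm := wf_mono CD r0 r HC Hr).
  assert (sw : 0 < sqrt (wf CD r) < 1).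
  { split. apply sqrt_lt_R0; lra. rewrite <- sqrt_1. apply sqrt_lt_1; lra. }
  assert (sv : 0 < sqrt (wf CD r0)) by (apply sqrt_lt_R0; lra).
  assert (svw : sqrt (wf CD r0) <= sqrt (wf CD r)) by (apply sqrt_le_1; lra).
  assert (Hss : sqrt (wf CD r) * sqrt (wf CD r) = wf CD r) by (apply sqrt_sqrt; lra).
  assert (HE : 0 < exp (2*CD*r)) by apply exp_pos.
  set (E := exp (2*CD*r)) in *.
  set (v := -(CD/l0) * (4*CD*E/((E+1)*(E+1))) / (2*sqrt (wf CD r)*(sqrt (wf CD r)*sqrt (wf CD r)))).
  assert (Hd : is_derive (Tp CD l0) r v).
  { unfold Tp, v. unfold wf in *. auto_derive.
    all: (fold E in w0, w1, sw, Hss |- *); unfold Rminus, Rdiv in *.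
    1: repeat split; lra.
    set (s := sqrt ((E + - (1)) * / (E + 1))) in *.
    assert (HEs : E = (1 + s*s)/(1 - s*s)).
    { rewrite Hss. field. split; try lra. }
    clearbody s. clearbody E. subst E. assert (1 - s*s <> 0) by nra. assert (1 + s*s <> 0) by nra.
    field. repeat split; try lra; nra. }
  split. exists v; auto.
  erewrite is_derive_unique by exact Hd. unfold v.
  set (s := sqrt (wf CD r)) in *. set (s0 := sqrt (wf CD r0)) in *.
  assert (Hq : 4*CD*E/((E+1)*(E+1)) <= CD).
  { replace (4*CD*E/((E+1)*(E+1))) with (CD - CD * ((E-1)*(E-1)) / ((E+1)*(E+1))) by (field; lra).
    assert (0 <= CD * ((E-1)*(E-1)) / ((E+1)*(E+1))).
    { unfold Rdiv; apply Rmult_le_pos; [apply Rmult_le_pos; [lra| apply Rle_0_sqr] | left; apply Rinv_0_lt_compat; nra]. } lra. }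
  assert (Hq0 : 0 <= 4*CD*E/((E+1)*(E+1))).
  { apply Rmult_le_pos. nra. left; apply Rinv_0_lt_compat; nra. }
  rewrite Hss. set (Q := 4*CD*E/((E+1)*(E+1))) in *.
  assert (HK : 0 < CD / l0) by (apply Rdiv_lt_0_compat; lra).
  assert (Hden : 0 < 2 * s0 * wf CD r0) by nra.
  assert (Hden2 : 2 * s0 * wf CD r0 <= 2 * s * wf CD r) by nra.
  assert (Hinv : / (2 * s * wf CD r) <= / (2 * s0 * wf CD r0)) by (apply Rinv_le_contravar; lra).
  assert (0 < / (2 * s * wf CD r)) by (apply Rinv_0_lt_compat; nra).
  rewrite Rabs_left1.
  - unfold Rdiv. replace (- (- (CD * / l0) * Q * / (2 * s * wf CD r))) with ((CD * / l0) * Q * / (2 * s * wf CD r)) by ring.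
    apply Rmult_le_compat. unfold Rdiv in HK. nra. lra. apply Rmult_le_compat_l. unfold Rdiv in HK; lra. lra. lra.
  - unfold Rdiv. unfold Rdiv in HK. assert (0 <= CD * / l0 * Q) by nra. nra.
Qed.

Lemma vsw_eq ud CD r : 0 < ud -> 0 < CD -> v_sw ud CD r / vbar_d ud CD = sqrt (wf CD r).
Proof.
  intros Hu HC. unfold v_sw, vbar_d, wf.
  assert (0 < exp (2*CD*r)) by apply exp_pos.
  set (E := exp (2*CD*r)) in *.
  assert (Hk : 0 < ud / CD) by (apply Rdiv_lt_0_compat; lra).
  assert (Hsk : 0 < sqrt (ud/CD)) by (apply sqrt_lt_R0; lra).
  replace ((E - 1) * ud / ((E + 1) * CD)) with ((E-1)/(E+1) * (ud/CD)) by (field; lra).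
  destruct (Rle_or_lt 0 ((E-1)/(E+1))).
  - rewrite sqrt_mult by lra. field. lra.
  - rewrite (sqrt_neg_0 ((E-1)/(E+1) * (ud/CD))), (sqrt_neg_0 ((E-1)/(E+1))) by nra. field; lra.
Qed.

Lemma T_is_derive ud CD r : 0 < ud -> 0 < CD -> 0 < r ->
  is_derive (Tbar_d ud CD) r (Tp CD (lambda0 ud CD) r).
Proof.
  intros Hu HC Hr.
  assert (Hl : 0 < lambda0 ud CD) by (unfold lambda0; apply sqrt_lt_R0; nra).
  apply (is_derive_ext (fun r => / lambda0 ud CD * (artanh (sqrt (wf CD r)) + atan (sqrt (wf CD r))))).
  - intros t. unfold Tbar_d. rewrite vsw_eq by auto. reflexivity.
  - apply T_deriv; auto.
Qed.
Lemma pow_le1 x k : 0 <= x <= 1 -> x ^ k <= 1.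
Proof. intros. rewrite <- (pow1 k). apply pow_incr. lra. Qed.

Lemma sqrt_sq0 x : sqrt (x ^ 2 + 0) = Rabs x.
Proof. rewrite Rplus_0_r, <- sqrt_Rsqr_abs. f_equal. unfold Rsqr. ring. Qed.

Lemma LA k c e t : 0 <= e ->
  is_derive (fun t => sqrt((t-c)^2+e)^(k+2)) t (INR(k+2)*(t-c)*sqrt((t-c)^2+e)^k).
Proof.
  intros He. destruct (Rlt_or_le 0 ((t-c)^2+e)) as [Hq|Hq].
  - auto_derive. auto.
    replace ((t + - c) * ((t + - c) * 1) + e) with ((t-c)^2+e) by ring.
    replace (Init.Nat.pred (k+2)) with (S k) by lia.
    assert (0 < sqrt ((t-c)^2+e)) by (apply sqrt_lt_R0; lra).
    set (N := sqrt ((t-c)^2+e)) in *.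
    change (N ^ S k) with (N * N^k). field. lra.
  - assert (0 <= (t-c)^2) by apply pow2_ge_0. assert (e = 0) by lra. assert (t - c = 0) by (apply Rsqr_0_uniq; unfold Rsqr; simpl in *; nra). replace t with c in * by lra. subst e.
    apply is_derive_Reals. intros eps Heps.
    exists (mkposreal (Rmin 1 eps) (Rmin_pos _ _ Rlt_0_1 Heps)). simpl. intros h Hh Hhd.
    replace (c + h - c) with h by ring. replace (c - c) with 0 by ring.
    replace (h*(h*1)+0) with (h^2+0) by ring. replace (0*(0*1)+0) with (0^2+0) by ring.
    rewrite !sqrt_sq0. rewrite Rabs_R0. rewrite (pow_ne_zero (k+2)) by lia.
    replace (Rabs h ^ (k+2)) with (Rabs h * (Rabs h * Rabs h ^ k)) by (replace (k+2)%nat with (S (S k)) by lia; simpl; ring).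
    replace ((Rabs h * (Rabs h * Rabs h ^ k) - 0) / h - INR (k + 2) * 0 * 0 ^ k)
      with ((Rabs h / h) * (Rabs h * Rabs h ^ k)) by (field; auto).
    rewrite Rabs_mult.
    assert (Hab : Rabs (Rabs h / h) = 1).
    { unfold Rdiv. rewrite Rabs_mult, Rabs_Rabsolu, Rabs_inv. field. now apply Rabs_no_R0. }
    rewrite Hab. rewrite Rabs_mult, Rabs_Rabsolu.
    assert (Rabs h < 1) by (eapply Rlt_le_trans; [exact Hhd| apply Rmin_l]).
    assert (Rabs h < eps) by (eapply Rlt_le_trans; [exact Hhd| apply Rmin_r]).
    assert (Rabs (Rabs h ^ k) <= 1).
    { rewrite Rabs_right. apply pow_le1. split; [apply Rabs_pos|lra].
      apply Rle_ge, pow_le, Rabs_pos. }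
    assert (0 <= Rabs h) by apply Rabs_pos.
    nra.
Qed.

Lemma LB k c e t : 0 <= e ->
  ex_derive (fun t => INR(k+2)*(t-c)*sqrt((t-c)^2+e)^k) t /\
  INR(k+2)*sqrt((t-c)^2+e)^k <= Derive (fun t => INR(k+2)*(t-c)*sqrt((t-c)^2+e)^k) t.
Proof.
  intros He.
  assert (Hd : 0 < INR (k+2)) by (apply lt_0_INR; lia).
  cut (exists v, is_derive (fun t => INR(k+2)*(t-c)*sqrt((t-c)^2+e)^k) t v /\
                 INR(k+2)*sqrt((t-c)^2+e)^k <= v).
  { intros [v [Hv Hl]]. split. exists v; auto. erewrite is_derive_unique by exact Hv. auto. }
  destruct k as [|m].
  - exists (INR (0+2)). split. { apply (is_derive_ext (fun t => INR (0+2)*(t-c))). intros; simpl; ring. auto_derive; simpl; try easy; lra. } simpl; lra.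
  - destruct (Rlt_or_le 0 ((t-c)^2+e)) as [Hq|Hq].
    + assert (HN : 0 < sqrt ((t-c)^2+e)) by (apply sqrt_lt_R0; lra).
      exists (INR(S m+2)*(sqrt((t-c)^2+e)^(S m) + INR(S m)*(t-c)^2*sqrt((t-c)^2+e)^m / sqrt((t-c)^2+e))).
      split.
      * auto_derive. auto.
        replace ((t + - c) * ((t + - c) * 1) + e) with ((t-c)^2+e) by ring.
        replace (Init.Nat.pred (S m)) with m by lia.
        set (N := sqrt ((t-c)^2+e)) in *.
        change (N ^ S m) with (N * N^m). change (match m with 0%nat => 1 | S _ => INR m + 1 end) with (INR (S m)). change (match (m+2)%nat with 0%nat => 1 | S _ => INR (m+2) + 1 end) with (INR (S m + 2)). field. lra.
      * assert (0 <= INR (S m) * (t - c) ^ 2 * sqrt ((t - c) ^ 2 + e) ^ m / sqrt ((t - c) ^ 2 + e)).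
        { apply Rmult_le_pos. apply Rmult_le_pos. apply Rmult_le_pos. apply pos_INR. apply pow2_ge_0.
          apply pow_le. lra. left. apply Rinv_0_lt_compat. lra. }
        nra.
    + assert (0 <= (t-c)^2) by apply pow2_ge_0. assert (e = 0) by lra.
      assert (t - c = 0) by (apply Rsqr_0_uniq; unfold Rsqr; simpl in *; nra).
      replace t with c in * by lra. subst e.
      exists 0. split.
      2:{ replace (c - c) with 0 by ring. replace (0^2+0) with 0 by ring. rewrite sqrt_0.
          rewrite pow_ne_zero by lia. lra. }
      apply is_derive_Reals. intros eps Heps.
      assert (Hed : 0 < eps / INR (S m + 2)) by (apply Rdiv_lt_0_compat; lra).
      exists (mkposreal (Rmin 1 (eps / INR (S m + 2))) (Rmin_pos _ _ Rlt_0_1 Hed)). intros h Hh Hhd. simpl in Hhd.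
      replace (c + h - c) with h by ring. replace (c - c) with 0 by ring.
      rewrite !sqrt_sq0. rewrite Rabs_R0. rewrite (pow_ne_zero (S m)) by lia.
      replace ((INR (S m + 2) * h * Rabs h ^ S m - INR (S m + 2) * 0 * 0) / h - 0)
        with (INR (S m + 2) * (Rabs h * Rabs h ^ m)) by (simpl; field; auto).
      rewrite Rabs_mult, Rabs_mult, Rabs_Rabsolu, (Rabs_right (INR _)) by lra.
      assert (Rabs h < 1) by (eapply Rlt_le_trans; [exact Hhd| apply Rmin_l]).
      assert (Rabs h < eps / INR (S m + 2)) by (eapply Rlt_le_trans; [exact Hhd| apply Rmin_r]).
      assert (Rabs (Rabs h ^ m) <= 1).
      { rewrite Rabs_right. apply pow_le1. split; [apply Rabs_pos|lra].
        apply Rle_ge, pow_le, Rabs_pos. }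
      assert (0 <= Rabs h) by apply Rabs_pos.
      assert (INR (S m + 2) * Rabs h < eps).
      { apply Rmult_lt_reg_l with (/ INR (S m + 2)). apply Rinv_0_lt_compat; lra.
        rewrite <- Rmult_assoc, Rinv_l by lra. unfold Rdiv in *. lra. }
      assert (0 <= Rabs (Rabs h ^ m)) by apply Rabs_pos.
      assert (INR (S m + 2) * Rabs h * Rabs (Rabs h ^ m) <= INR (S m + 2) * Rabs h * 1).
      { apply Rmult_le_compat_l; [nra|lra]. }
      nra.
Qed.

Ltac fixD := repeat match goal with |- context [Derive (fun x => ?f x) ?y] => change (Derive (fun x => f x) y) with (Derive f y) end.

Lemma rpow_deriv (S : R -> R) x s1 a : is_derive S x s1 -> 0 < S x ->
  is_derive (fun y => Rpower (S y) a) x (Rpower (S x) a * (a * (s1 / S x))).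
Proof.
  intros HS Hp. unfold Rpower. auto_derive.
  - repeat split; auto; try lra; eexists; eassumption.
  - fixD; rewrite (is_derive_unique _ _ _ HS). field. lra.
Qed.

Lemma gp_deriv (g S S1 : R -> R) x g1 s1 s2 a :
  is_derive g x g1 -> is_derive S x s1 -> is_derive S1 x s2 -> S x <> 0 ->
  is_derive (fun y => g y * (a * (S1 y / S y))) x
    (g1 * (a * (S1 x / S x)) + g x * (a * ((s2 * S x - S1 x * s1) / S x ^ 2))).
Proof.
  intros Hg HS HS1 Hn. auto_derive.
  - repeat split; auto; try lra; eexists; eassumption.
  - fixD; rewrite (is_derive_unique _ _ _ Hg), (is_derive_unique _ _ _ HS), (is_derive_unique _ _ _ HS1).
    field. auto.
Qed.

Lemma f_deriv (T g : R -> R) x t1 g1 A va rho D :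
  is_derive T (g x + rho) t1 -> is_derive g x g1 ->
  is_derive (fun y => A + y + va * (T (g y + rho) + D)) x (1 + va * (t1 * g1)).
Proof.
  intros HT Hg. auto_derive.
  - repeat split; auto; try lra; eexists; eassumption.
  - fixD; rewrite (is_derive_unique _ _ _ Hg), (is_derive_unique _ _ _ HT). ring.
Qed.

Lemma f1_deriv (Tp g gp : R -> R) x tpp g1 gpp va rho :
  is_derive Tp (g x + rho) tpp -> is_derive g x g1 -> is_derive gp x gpp ->
  is_derive (fun y => 1 + va * (Tp (g y + rho) * gp y)) x
    (va * (tpp * g1 * gp x + Tp (g x + rho) * gpp)).
Proof.
  intros HT Hg Hgp. auto_derive.
  - repeat split; auto; try lra; eexists; eassumption.
  - fixD; rewrite (is_derive_unique _ _ _ Hg), (is_derive_unique _ _ _ HT), (is_derive_unique _ _ _ Hgp). ring.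
Qed.

Lemma H_cont (g S S1 Tp : R -> R) x K m a B rho :
  ex_derive g x -> ex_derive S x -> ex_derive S1 x -> ex_derive Tp (g x + rho) -> S x <> 0 ->
  continuity_pt (fun y => K * g y * m * (a / S y) - B * (g y * (a * (S1 y / S y)))^2
                       - Tp (g y + rho) * g y * (a * (S1 y * S1 y / S y ^ 2))) x.
Proof.
  intros. match goal with |- continuity_pt ?h x => set (hh := h) end.
  assert (Hd : ex_derive hh x) by (unfold hh; auto_derive; repeat split; auto).
  apply ex_derive_continuous in Hd. apply continuity_pt_filterlim. exact Hd.
Qed.

Lemma is_derive_sumR (F : nat -> R -> R) (dF : nat -> R) x n :
  (forall j, (j <= n)%nat -> is_derive (F j) x (dF j)) ->
  is_derive (fun y => sum_f_R0 (fun j => F j y) n) x (sum_f_R0 dF n).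
Proof.
  induction n; intros H.
  - simpl. apply H. lia.
  - simpl. apply (is_derive_plus (fun y => sum_f_R0 (fun j => F j y) n) (F (S n))).
    apply IHn; intros; apply H; lia. apply H; lia.
Qed.

Lemma sum_nonneg (F : nat -> R) n : (forall j, (j <= n)%nat -> 0 <= F j) -> 0 <= sum_f_R0 F n.
Proof.
  induction n; intros H; simpl. apply H; lia.
  assert (0 <= sum_f_R0 F n) by (apply IHn; intros; apply H; lia).
  assert (0 <= F (S n)) by (apply H; lia). lra.
Qed.

Lemma sum_ge_term (F : nat -> R) n j : (forall j, (j <= n)%nat -> 0 <= F j) -> (j <= n)%nat ->
  F j <= sum_f_R0 F n.
Proof.
  induction n; intros H Hj; simpl.
  - replace j with 0%nat by lia. lra.
  - destruct (Nat.eq_dec j (S n)).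
    + subst. assert (0 <= sum_f_R0 F n) by (apply sum_nonneg; intros; apply H; lia). lra.
    + assert (F j <= sum_f_R0 F n) by (apply IHn; [intros; apply H; lia| lia]).
      assert (0 <= F (S n)) by (apply H; lia). lra.
Qed.

Lemma sum_le (F G : nat -> R) n : (forall j, (j <= n)%nat -> F j <= G j) ->
  sum_f_R0 F n <= sum_f_R0 G n.
Proof.
  induction n; intros H; simpl. apply H; lia.
  assert (sum_f_R0 F n <= sum_f_R0 G n) by (apply IHn; intros; apply H; lia).
  assert (F (S n) <= G (S n)) by (apply H; lia). lra.
Qed.

Definition cc (u r : vec3) : R := vx u * vx r + vy u * vy r + vz u * vz r.
Definition ee (u r : vec3) : R :=
  (vx r - cc u r * vx u)^2 + (vy r - cc u r * vy u)^2 + (vz r - cc u r * vz u)^2.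

Lemma ee_nonneg u r : 0 <= ee u r.
Proof. unfold ee. assert (H1 := pow2_ge_0 (vx r - cc u r * vx u)).
  assert (H2 := pow2_ge_0 (vy r - cc u r * vy u)). assert (H3 := pow2_ge_0 (vz r - cc u r * vz u)). lra. Qed.

Lemma varrho_form u rd j Rr : norm3 u = 1 ->
  varrho u rd j Rr = sqrt ((Rr - cc u (rd j))^2 + ee u (rd j)).
Proof.
  intros Hu. unfold norm3 in Hu.
  assert (HX : vx u ^ 2 + vy u ^ 2 + vz u ^ 2 = 1).
  { assert (0 <= vx u ^ 2 + vy u ^ 2 + vz u ^ 2).
    { assert (H1 := pow2_ge_0 (vx u)). assert (H2 := pow2_ge_0 (vy u)). assert (H3 := pow2_ge_0 (vz u)). lra. }
    rewrite <- (sqrt_sqrt _ H), Hu. ring. }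
  unfold varrho, norm3, ee, cc. f_equal. unfold sub3, scal3, vx, vy, vz in *. simpl.
  destruct u as [[a b] c]. destruct (rd j) as [[x y] z]. simpl in *.
  set (C := a*x+b*y+c*z).
  transitivity ((Rr - C)^2 + ((x - C*a)^2 + (y - C*b)^2 + (z - C*c)^2) + (a^2+b^2+c^2 - 1)*(Rr^2 - C^2)).
  - unfold C. ring.
  - replace (a^2+b^2+c^2 - 1) with 0 by (simpl in *; lra). ring.
Qed.

Lemma two_bound u rd Rr :
  norm3 (sub3 (rd 0%nat) (rd 1%nat)) / 2 <= varrho u rd 0 Rr \/
  norm3 (sub3 (rd 0%nat) (rd 1%nat)) / 2 <= varrho u rd 1 Rr.
Proof.
  unfold varrho, norm3, sub3, scal3, vx, vy, vz.
  destruct u as [[a b] c]. destruct (rd 0%nat) as [[x0 y0] z0]. destruct (rd 1%nat) as [[x1 y1] z1]. cbn [fst snd].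
  set (Y := (x0 - x1) ^ 2 + (y0 - y1) ^ 2 + (z0 - z1) ^ 2).
  set (X0 := (Rr * a - x0) ^ 2 + (Rr * b - y0) ^ 2 + (Rr * c - z0) ^ 2).
  set (X1 := (Rr * a - x1) ^ 2 + (Rr * b - y1) ^ 2 + (Rr * c - z1) ^ 2).
  assert (HY : 0 <= Y).
  { unfold Y. assert (H1 := pow2_ge_0 (x0-x1)). assert (H2 := pow2_ge_0 (y0-y1)). assert (H3 := pow2_ge_0 (z0-z1)). lra. }
  assert (H2 : Y <= 2*X0 + 2*X1).
  { assert (E : 2*X0+2*X1 - Y = (2*Rr*a-x0-x1)^2 + (2*Rr*b-y0-y1)^2 + (2*Rr*c-z0-z1)^2) by (unfold X0,X1,Y; ring).
    assert (H1 := pow2_ge_0 (2*Rr*a-x0-x1)). assert (H3 := pow2_ge_0 (2*Rr*b-y0-y1)). assert (H4 := pow2_ge_0 (2*Rr*c-z0-z1)). lra. }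
  assert (Hs : sqrt Y / 2 = sqrt (Y / 4)).
  { rewrite <- (sqrt_pow2 (sqrt Y / 2)). f_equal. unfold Rdiv. rewrite Rpow_mult_distr, pow2_sqrt by lra. field.
    apply Rmult_le_pos. apply sqrt_pos. lra. }
  rewrite Hs. destruct (Rle_or_lt (Y/4) X0).
  - left. apply sqrt_le_1; lra.
  - right. apply sqrt_le_1; lra.
Qed.

Lemma final_ineq g S S1 S2 a a0 K m B tpp : 0 < g -> 0 < S -> 0 < a -> K <= a0 -> 0 < K ->
  0 <= m -> m <= S2 -> Rabs tpp <= B ->
  K*g*m*(a/S) - B*(g*(a*(S1/S)))^2 - a0*g*(a*(S1*S1/S^2)) <=
  tpp*(g*(a*(S1/S)))*(g*(a*(S1/S))) + a0*((g*(a*(S1/S)))*(a*(S1/S)) + g*(a*((S2*S - S1*S1)/S^2))).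
Proof.
  intros Hg HS Ha HK HK0 Hm HmS Ht.
  set (q := a*(S1/S)).
  replace ((S2*S - S1*S1)/S^2) with (S2/S - S1*S1/S^2) by (field; lra).
  assert (h1 : -B <= tpp) by (assert (Hab := Rle_abs (-tpp)); rewrite Rabs_Ropp in Hab; lra).
  assert (h2 : 0 <= (g*q)^2) by apply pow2_ge_0.
  assert (h3 : 0 <= a0*g*(q*q)) by (assert (0 <= q*q) by nra; apply Rmult_le_pos; nra).
  assert (h4 : K*m <= a0*S2) by nra.
  assert (h5 : 0 < g*a/S) by (apply Rdiv_lt_0_compat; nra).
  assert (h6 : K*m*(g*a/S) <= a0*S2*(g*a/S)) by (apply Rmult_le_compat_r; lra).
  assert (E1 : K*g*m*(a/S) = K*m*(g*a/S)) by (field; lra).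
  assert (E2 : a0*(g*(a*(S2/S))) = a0*S2*(g*a/S)) by (field; lra).
  assert ((tpp + B)*(g*q)^2 >= 0) by nra.
  replace (tpp * (g * q) * (g * q) + a0 * (g * q * q + g * (a * (S2 / S - S1 * S1 / S ^ 2))))
    with ((tpp + B)*(g*q)^2 - B*(g*q)^2 + a0*g*(q*q) + a0*(g*(a*(S2/S))) - a0*g*(a*(S1*S1/S^2))) by ring.
  lra.
Qed.

Theorem lemma2
  (rho_p rho_ac va ud CD rho_snp DTg : R) (delta Nd : nat)
  (rd : nat -> vec3) (u : vec3) (Rstar : R)
  (Hrho_p : 0 < rho_p) (Hrho_ac : 0 < rho_ac) (Hva : 0 < va)
  (Hud : 0 < ud) (HCD : 0 < CD) (Hsnp : 0 < rho_snp) (HDT : 0 <= DTg)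
  (Hdelta : (2 <= delta)%nat) (HNd : (2 <= Nd)%nat)
  (Hdistinct : forall j j' : nat, (j < Nd)%nat -> (j' < Nd)%nat -> j <> j' ->
      0 < norm3 (sub3 (rd j) (rd j')))
  (Hu : norm3 u = 1)
  (HRpos : 0 < Rstar)
  (Hcrit : is_derive (varrho_tilde delta Nd u rd) Rstar 0) :
  exists eps : R, 0 < eps /\
    forall Rr : R, Rabs (Rr - Rstar) < eps ->
      ex_derive_n (f_gather rho_ac va ud CD rho_snp DTg delta Nd u rd) 2 Rr /\
      0 < Derive_n (f_gather rho_ac va ud CD rho_snp DTg delta Nd u rd) 2 Rr.
Proof.
  destruct delta as [|[|k]]; try lia.
  replace (S (S k)) with (k+2)%nat in * by lia.
  set (n := (Nd - 1)%nat).
  assert (Hn : (1 <= n)%nat) by (unfold n; lia).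
  set (Dd := norm3 (sub3 (rd 0%nat) (rd 1%nat))).
  assert (HDd : 0 < Dd) by (apply Hdistinct; lia).
  assert (Hdk : 0 < INR (k+2)) by (apply lt_0_INR; lia).
  set (a := / INR (k+2)).
  assert (Ha : 0 < a) by (apply Rinv_0_lt_compat; lra).
  set (Nf := fun j t => sqrt ((t - cc u (rd j))^2 + ee u (rd j))).
  set (Sf := fun t => sum_f_R0 (fun j => varrho u rd j t ^ (k+2)) n).
  set (D1 := fun j t => INR (k+2) * (t - cc u (rd j)) * sqrt ((t - cc u (rd j))^2 + ee u (rd j))^k).
  set (S1 := fun t => sum_f_R0 (fun j => D1 j t) n).
  set (S2 := fun t => sum_f_R0 (fun j => Derive (D1 j) t) n).
  assert (HS : forall t, is_derive Sf t (S1 t)).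
  { intros t. unfold Sf, S1.
    apply (is_derive_sumR (fun j y => varrho u rd j y ^ (k+2)) (fun j => D1 j t)).
    intros j _. apply (is_derive_ext (fun y => sqrt ((y - cc u (rd j))^2 + ee u (rd j)) ^ (k+2))).
    - intros y. rewrite varrho_form by auto. reflexivity.
    - apply LA. apply ee_nonneg. }
  assert (HS1 : forall t, is_derive S1 t (S2 t)).
  { intros t. unfold S1, S2.
    apply (is_derive_sumR D1 (fun j => Derive (D1 j) t)).
    intros j _. apply Derive_correct. apply LB. apply ee_nonneg. }
  assert (Hpick : forall t, exists j, (j <= n)%nat /\ Dd / 2 <= varrho u rd j t).
  { intros t. destruct (two_bound u rd t) as [H|H]; [exists 0%nat|exists 1%nat]; split; auto; lia. }
  set (m := INR (k+2) * (Dd/2)^k).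
  assert (Hm : 0 < m) by (apply Rmult_lt_0_compat; auto; apply pow_lt; lra).
  assert (HS2 : forall t, m <= S2 t).
  { intros t. destruct (Hpick t) as [j0 [Hj0 Hb]].
    apply Rle_trans with (sum_f_R0 (fun j => INR (k+2) * sqrt ((t - cc u (rd j))^2 + ee u (rd j))^k) n).
    - rewrite varrho_form in Hb by auto.
      apply Rle_trans with (INR (k+2) * sqrt ((t - cc u (rd j0))^2 + ee u (rd j0))^k).
      + unfold m. apply Rmult_le_compat_l. lra. apply pow_incr. lra.
      + apply (sum_ge_term (fun j => INR (k+2) * sqrt ((t - cc u (rd j))^2 + ee u (rd j))^k)); auto.
        intros. apply Rmult_le_pos. lra. apply pow_le, sqrt_pos.
    - unfold S2. apply sum_le. intros j _. apply LB. apply ee_nonneg. }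
  assert (HSpos : forall t, 0 < Sf t).
  { intros t. destruct (Hpick t) as [j0 [Hj0 Hb]].
    apply Rlt_le_trans with (varrho u rd j0 t ^ (k+2)).
    - apply pow_lt. lra.
    - unfold Sf. apply (sum_ge_term (fun j => varrho u rd j t ^ (k+2))); auto.
      intros. apply pow_le. unfold varrho, norm3. apply sqrt_pos. }
  set (g := varrho_tilde (k+2) Nd u rd).
  set (gp := fun t => g t * (a * (S1 t / Sf t))).
  assert (Hg : forall t, is_derive g t (gp t)).
  { intros t. unfold g, gp, varrho_tilde. apply (rpow_deriv Sf t (S1 t) a); auto. }
  assert (Hgpos : forall t, 0 < g t).
  { intros t. unfold g, varrho_tilde, Rpower. apply exp_pos. }
  set (gpp := fun t => gp t * (a * (S1 t / Sf t)) + g t * (a * ((S2 t * Sf t - S1 t * S1 t) / Sf t ^ 2))).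
  assert (Hgp : forall t, is_derive gp t (gpp t)).
  { intros t. unfold gp, gpp. apply gp_deriv; auto. specialize (HSpos t). lra. }
  set (l0 := lambda0 ud CD).
  assert (Hl0 : 0 < l0) by (unfold l0, lambda0; apply sqrt_lt_R0; nra).
  set (K := CD / l0).
  assert (HK : 0 < K) by (unfold K; apply Rdiv_lt_0_compat; lra).
  set (B := CD / l0 * CD / (2 * sqrt (wf CD rho_snp) * wf CD rho_snp)).
  set (f := f_gather rho_ac va ud CD rho_snp DTg (k+2) Nd u rd).
  set (f1 := fun t => 1 + va * (Tp CD l0 (g t + rho_snp) * gp t)).
  assert (HG : forall t, 0 < g t + rho_snp) by (intros t; specialize (Hgpos t); lra).
  assert (Hf : forall t, is_derive f t (f1 t)).
  { intros t. unfold f, f1, f_gather. apply (f_deriv (Tbar_d ud CD) g); auto.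
    apply T_is_derive; auto. }
  assert (HTp : forall t, ex_derive (Tp CD l0) (g t + rho_snp) /\
                 Rabs (Derive (Tp CD l0) (g t + rho_snp)) <= B).
  { intros t. apply Tp_deriv; auto. specialize (Hgpos t); lra. }
  assert (HTpK : forall t, K <= Tp CD l0 (g t + rho_snp)).
  { intros t. unfold Tp, K. destruct (wf_bounds CD (g t + rho_snp)) as [w0 w1]; auto.
    assert (0 < sqrt (wf CD (g t + rho_snp)) < 1).
    { split. apply sqrt_lt_R0; lra. rewrite <- sqrt_1. apply sqrt_lt_1; lra. }
    unfold Rdiv at 2. apply Rle_trans with (CD / l0 * 1). lra.
    apply Rmult_le_compat_l. left; auto. rewrite <- Rinv_1. apply Rinv_le_contravar; lra. }
  set (f2 := fun t => va * (Derive (Tp CD l0) (g t + rho_snp) * gp t * gp t + Tp CD l0 (g t + rho_snp) * gpp t)).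
  assert (Hf1 : forall t, is_derive f1 t (f2 t)).
  { intros t. unfold f1, f2. apply (f1_deriv (Tp CD l0) g gp); auto.
    apply Derive_correct. apply HTp. }
  assert (HS1z : S1 Rstar = 0).
  { assert (E : gp Rstar = 0).
    { rewrite <- (is_derive_unique _ _ _ (Hg Rstar)). apply is_derive_unique. exact Hcrit. }
    unfold gp in E. specialize (Hgpos Rstar). specialize (HSpos Rstar).
    apply Rmult_integral in E. destruct E as [E|E]. lra.
    apply Rmult_integral in E. destruct E as [E|E]. lra.
    unfold Rdiv in E. apply Rmult_integral in E. destruct E as [E|E]. auto.
    assert (0 < / Sf Rstar) by (apply Rinv_0_lt_compat; lra). lra. }
  set (H := fun y => K * g y * m * (a / Sf y) - B * (g y * (a * (S1 y / Sf y)))^2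
                       - Tp CD l0 (g y + rho_snp) * g y * (a * (S1 y * S1 y / Sf y ^ 2))).
  assert (Hcont : continuity_pt H Rstar).
  { unfold H. apply H_cont.
    - exists (gp Rstar); auto.
    - exists (S1 Rstar); auto.
    - exists (S2 Rstar); auto.
    - apply HTp.
    - specialize (HSpos Rstar); lra. }
  assert (HHs : 0 < H Rstar).
  { unfold H. rewrite HS1z. specialize (Hgpos Rstar). specialize (HSpos Rstar).
    replace (0 / Sf Rstar) with 0 by (field; lra). replace (0 * 0 / Sf Rstar ^ 2) with 0 by (field; lra).
    assert (0 < a / Sf Rstar) by (apply Rdiv_lt_0_compat; lra).
    assert (0 < K * g Rstar * m * (a / Sf Rstar)) by (apply Rmult_lt_0_compat; [apply Rmult_lt_0_compat; [apply Rmult_lt_0_compat|]|]; lra).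
    simpl. lra. }
  unfold continuity_pt, continue_in, limit1_in, limit_in in Hcont.
  destruct (Hcont (H Rstar) HHs) as [alp [Halp Hal]].
  exists alp. split; auto.
  intros Rr HRr.
  assert (HHr : 0 < H Rr).
  { destruct (Req_dec Rr Rstar) as [E|E]. subst; auto.
    assert (Hd := Hal Rr (conj (conj I (not_eq_sym E)) HRr)). simpl in Hd. unfold R_dist in Hd.
    assert (Hab := Rle_abs (-(H Rr - H Rstar))). rewrite Rabs_Ropp in Hab. lra. }
  assert (HDf : forall t, Derive_n f 1 t = f1 t).
  { intros t. simpl. apply is_derive_unique. apply Hf. }
  split.
  - change (ex_derive (Derive_n f 1) Rr). apply (ex_derive_ext f1). intros; symmetry; auto.
    exists (f2 Rr); auto.
  - change (0 < Derive (Derive_n f 1) Rr). rewrite (Derive_ext _ f1 _ HDf).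
    rewrite (is_derive_unique _ _ _ (Hf1 Rr)).
    apply Rlt_le_trans with (va * H Rr). apply Rmult_lt_0_compat; auto.
    unfold f2. apply Rmult_le_compat_l. lra.
    unfold H, gpp, gp. apply final_ineq; auto; try lra.
    apply HTp.
Qed.
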